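(* Let $q$ be a prime power and $n\ge k\ge0$ integers. Let $V_1,\dots,V_k$ be subspaces of $\mathbb{F}_q^n$ such that $\dim\big(\bigcap_{i\in\Omega}V_i\big)\le k-|\Omega|$ for all nonempty $\Omega\subseteq[k]$. Then there exist subspaces $V_i'$ of $\mathbb{F}_q^n$ with $V_i\subseteq V_i'$, $i=1,\dots,k$, such that (1) $\dim\big(\bigcap_{i\in\Omega}V_i'\big)\le k-|\Omega|$ for all nonempty $\Omega\subseteq[k]$, and (2) $\dim V_i'=k-1$ for all $i\in[k]$. *)

(* Defs.v *)
From mathcomp Require Import all_boot all_order all_algebra all_field.

(* Main.v *)
Require Import Defs.
From mathcomp Require Import all_boot all_order all_algebra all_field.
From mathcomp Require Import zify.

Section Aux.
Variables (F : finFieldType) (n k : nat).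
Hypothesis hkn : (k <= n)%N.
Local Notation vs := {vspace 'rV[F]_n}.

Definition hyp (V : 'I_k -> vs) := forall Om : {set 'I_k}, Om != set0 ->
  (\dim (\bigcap_(j in Om) V j)%VS <= k - #|Om|)%N.

Lemma dim_add_line (U : vs) v : v \notin U -> \dim (U + <[v]>)%VS = (\dim U).+1.
Proof.
move=> vU.
have v0 : v != 0%R by apply: contraNneq vU => ->; rewrite mem0v.
have := dimv_sum_cap U <[v]>; rewrite dim_vline v0 /= => E.
apply/eqP; rewrite eqn_leq; apply/andP; split; first by lia.
rewrite ltnNge; apply: contra vU => le.
have /eqP -> : U == (U + <[v]>)%VS by rewrite eqEdim addvSl.
exact: (subvP (addvSr U <[v]>) v (memv_line v)).
Qed.

Lemma card_le (A : {set 'I_k}) : (#|A| <= k)%N.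
Proof. by rewrite -[X in (_ <= X)%N]card_ord max_card. Qed.

Lemma cap_tight (V : 'I_k -> vs) (H : hyp V) (A B : {set 'I_k}) :
  A :&: B != set0 ->
  \dim (\bigcap_(j in A) V j)%VS = k - #|A| ->
  \dim (\bigcap_(j in B) V j)%VS = k - #|B| ->
  \dim (\bigcap_(j in (A :&: B)%SET) V j)%VS = k - #|A :&: B|.
Proof.
move=> AB0 hA hB.
set WA := (\bigcap_(j in A) V j)%VS; set WB := (\bigcap_(j in B) V j)%VS.
have s1 : (WA + WB <= \bigcap_(j in (A :&: B)%SET) V j)%VS.
  rewrite subv_add; apply/andP; split; apply/subv_bigcapP => j;
  rewrite in_setI => /andP [jA jB].
    by apply: (bigcapv_inf j) => //; rewrite subvv.
  by apply: (bigcapv_inf j) => //; rewrite subvv.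
have s2 : (WA :&: WB <= \bigcap_(j in (A :|: B)%SET) V j)%VS.
  apply/subv_bigcapP => j; rewrite in_setU => /orP [jA|jB].
    by apply: subv_trans (capvSl _ _) _; apply: (bigcapv_inf j) => //; rewrite subvv.
  by apply: subv_trans (capvSr _ _) _; apply: (bigcapv_inf j) => //; rewrite subvv.
have AUB0 : A :|: B != set0.
  apply: contraNneq AB0 => e; rewrite -subset0 -e.
  by apply/subsetP => x; rewrite in_setI in_setU => /andP [-> _].
have h1 := H _ AB0. have h2 := H _ AUB0.
have d1 := dimvS s1. have d2 := dimvS s2.
have E := dimv_sum_cap WA WB.
have C := cardsUI A B.
have c1 := card_le A; have c2 := card_le B; have c3 := card_le (A :|: B).
apply/eqP; rewrite eqn_leq h1 /=. have hA2 : \dim WA = k - #|A| := hA. have hB2 : \dim WB = k - #|B| := hB. have t0 := leq_trans d2 h2. have t0b := leq_trans d1 h1. unfold reverse_coercion in *. have t1 : (\dim (WA + WB) + (k - #|A :|: B|) >= \dim WA + \dim WB)%N by lia. have t2 : (\dim (WA + WB) >= k - #|A :&: B|)%N by lia. exact: leq_trans t2 d1.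
Qed.

Definition upd (V : 'I_k -> vs) i v : 'I_k -> vs :=
  fun j => if j == i then (V i + <[v]>)%VS else V j.

Lemma upd_out V i v (Om : {set 'I_k}) : i \notin Om ->
  (\bigcap_(j in Om) upd V i v j)%VS = (\bigcap_(j in Om) V j)%VS.
Proof.
move=> iO; apply: eq_bigr => j jO; rewrite /upd.
by case: eqP => // e; move: jO; rewrite e (negbTE iO).
Qed.

Lemma step (V : 'I_k -> vs) (H : hyp V) i : (\dim (V i) < k - 1)%N ->
  exists v, v \notin V i /\ hyp (upd V i v).
Proof.
move=> hi.
pose W (Om : {set 'I_k}) := (\bigcap_(j in Om) V j)%VS.
pose tight (Om : {set 'I_k}) := (i \in Om) && (\dim (W Om) == k - #|Om|).
have [S [VS [dS tS]]] : exists S : vs, (V i <= S)%VS /\ (\dim S < n)%N /\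
    forall Om, tight Om -> (V i + W (Om :\ i) <= S)%VS.
  case: (pickP tight) => [N0 tN0|nt]; last first.
    exists (V i); split; first exact: subvv.
    split; first by lia.
    by move=> Om; rewrite nt.
  case: (arg_minnP (fun A : {set 'I_k} => #|A|) tN0) => N tN minN.
  move: (tN) => /andP [iN /eqP dN].
  exists (V i + W (N :\ i))%VS; split; first exact: addvSl.
  split.
    have WN : W N = (V i :&: W (N :\ i))%VS by rewrite /W (big_setD1 i iN).
    have E := dimv_sum_cap (V i) (W (N :\ i)).
    rewrite -WN dN in E.
    have cN := cardsD1 i N; rewrite iN add1n in cN.
    have := card_le N.
    case: (eqVneq (N :\ i) set0) => [Ne|Nn0].
      have : W (N :\ i) = fullv by rewrite Ne /W big_set0.
      move=> e; move: WN; rewrite e capvf => WN.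
      rewrite Ne cards0 in cN; rewrite WN cN in dN; lia.
    have := H _ Nn0; rewrite -/(W _). unfold reverse_coercion in *. lia.
  move=> Om tOm; apply: addvS; first exact: subvv.
  have NO : N \subset Om.
    have iNO : i \in N :&: Om by rewrite in_setI iN; case/andP: tOm.
    have NO0 : N :&: Om != set0 by apply/set0Pn; exists i.
    move: (tOm) => /andP [_ /eqP dO].
    have t2 : tight (N :&: Om).
      by rewrite /tight iNO /W (@cap_tight V H _ _ NO0 dN dO) eqxx.
    have := minN _ t2 => le.
    have : N :&: Om == N by rewrite eqEcard subsetIl le.
    by move/eqP/setIidPl.
  apply/subv_bigcapP => j; rewrite in_setD1 => /andP [ji jN].
  apply: (bigcapv_inf j); last exact: subvv.
  by rewrite in_setD1 ji (subsetP NO).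
have : ~~ (fullv <= S)%VS.
  apply/negP => /dimvS; rewrite dimvf dim_matrix; rewrite /GRing.mul /=; unfold reverse_coercion in *; lia.
case/subvPn => v _ vS.
have vVi : v \notin V i by apply: contra vS; apply: (subvP VS).
exists v; split => // Om Om0.
case: (boolP (i \in Om)) => iO; last by rewrite upd_out //; apply: H.
rewrite (big_setD1 i iO) upd_out ?setD11 //.
rewrite {1}/upd eqxx.
set T := (\bigcap_(j in (Om :\ i)%SET) V j)%VS.
change (\dim ((V i + <[v]>) :&: T)%VS <= k - #|Om|)%N.
have WO : W Om = (V i :&: T)%VS by rewrite /W (big_setD1 i iO).
have hO := H _ Om0; rewrite -/(W Om) WO in hO.
have E1 := dimv_sum_cap (V i) T.
have E2 := dimv_sum_cap (V i + <[v]>)%VS T.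
rewrite dim_add_line // in E2.
have e3 : (V i + <[v]> + T = (V i + T) + <[v]>)%VS.
  by rewrite -!addvA (addvC <[v]>%VS).
have s3 : (\dim (V i + T) <= \dim (V i + <[v]> + T))%N.
  by apply: dimvS; rewrite e3 addvSl.
case: (boolP (tight Om)) => tO; last first.
  have : \dim (W Om) != k - #|Om| by move: tO; rewrite /tight iO.
  rewrite WO => ne. unfold reverse_coercion in *. lia.
have vT : v \notin (V i + T)%VS by apply: contra vS; apply: (subvP (tS _ tO)).
rewrite e3 dim_add_line // in E2.
unfold reverse_coercion in *. lia.
Qed.

Lemma main_ind m : forall V : 'I_k -> vs, hyp V ->
  (\sum_j (k - 1 - \dim (V j)) <= m)%N ->
  exists V' : 'I_k -> vs,
    (forall i, (V i <= V' i)%VS) /\ hyp V' /\ (forall i, \dim (V' i) = (k - 1)%N).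
Proof.
elim: m => [|m IH] V H hm;
 (case: (pickP (fun j => \dim (V j) < k - 1)%N) => [i hi|none];
  [ | exists V; split; first (by move=> i; exact: subvv); split => // i;
      have := H [set i]; rewrite big_set1 cards1 => h;
      have := none i; move: h => /(_ _) h /negbT; rewrite -leqNgt => h2;
      apply/eqP; rewrite eqn_leq h2 andbT; apply: h;
      apply/set0Pn; exists i; rewrite set11 //]);
  have [v [vV H2]] := @step V H i hi;
  have ds : (\sum_j (k - 1 - \dim (upd V i v j)) + 1 = \sum_j (k - 1 - \dim (V j)))%N by
   (rewrite (bigD1 i) //= [in RHS](bigD1 i) //=;
    rewrite (eq_bigr (fun j => k - 1 - \dim (V j))%N);
    [ rewrite /upd eqxx dim_add_line //; lia
    | by move=> j /negbTE ji; rewrite /upd ji ]).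
- lia.
- have [V' [s [H' d]]] := IH _ H2 ltac:(lia).
  exists V'; split => // j; apply: subv_trans (s j).
  by rewrite /upd; case: eqP => [->|_]; [exact: addvSl | exact: subvv].
Qed.

End Aux.

(* F_q is modelled as an arbitrary finite field F (q = #|F|, a prime power);
   F_q^n is the row space 'rV[F]_n, [k] is 'I_k. *)
Theorem mainTheorem11 (F : finFieldType) (n k : nat) (hkn : (k <= n)%N)
  (V : 'I_k -> {vspace 'rV[F]_n}) :
  (forall Om : {set 'I_k}, Om != set0 ->
     (\dim (\bigcap_(i in Om) V i)%VS <= k - #|Om|)%N) ->
  exists V' : 'I_k -> {vspace 'rV[F]_n},
    (forall i, (V i <= V' i)%VS) /\
    (forall Om : {set 'I_k}, Om != set0 ->
       (\dim (\bigcap_(i in Om) V' i)%VS <= k - #|Om|)%N) /\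
    (forall i, \dim (V' i) = (k - 1)%N).
Proof.
move=> H.
exact: (@main_ind F n k hkn _ V H (leqnn _)).
Qed.
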